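(* Let $x\in A$ with $x>1$, and let $y$ be the largest element of $A$ that is less than $x$. Let $n\ge 1$, let $P_x$ be the position of $\mathrm{AGG}(n,A)$ with one cell containing a tile of value $x$ and $n-1$ empty cells, and define $P_y$ similarly. Then $P_x$ is reachable in $\mathrm{AGG}(n,A)$ if and only if both of the following hold: (1) $P_y$ is reachable in $\mathrm{AGG}(n,A)$; (2) some position of total value exactly $x-y$ is reachable in $\mathrm{AGG}(n-1,A)$.
   Context: Let $A$ be a set of positive integers with $1\in A$ (the allowed tile values). For an integer $n\ge 0$, the abstract generalized 2048 game $\mathrm{AGG}(n,A)$ is played on $n$ indistinguishable cells. A position assigns to each cell either nothing (the cell is empty) or a tile carrying a value in $A$. The initial position has all cells empty. A step, which can be performed from any position having at least one empty cell, consists of: (i) placing a new tile of value $1$ into a chosen empty cell; then (ii) optionally choosing any collection of pairwise disjoint sets of nonempty cells such that the sum of the tile values in each chosen set belongs to $A$, and merging each chosen set into a single tile, whose value is that sum, placed in one cell of the set, the other cells of the set becoming empty. The game ends when, after a step, all cells are nonempty (no further step is then possible). A position is reachable if it can be obtained from the initial position by a finite sequence of steps. The total value of a position is the sum of the values of its tiles. ($\mathrm{AGG}(0,A)$ has only the empty position, of total value $0$.) *)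

(* Defs.v *)
From mathcomp Require Import all_boot.
Set Implicit Arguments. Unset Strict Implicit. Unset Printing Implicit Defensive.

(* Since cells are indistinguishable, a position of AGG(n,A) is represented by
   the list of the values of its nonempty cells (order irrelevant; positions
   are compared up to permutation).  The number of empty cells is
   n - size p.  The set A of allowed values is a predicate on nat. *)

(* One step (requires an empty cell, i.e. size p < n): add a tile 1, then
   partition the tiles into blocks; every block of size >= 2 is a chosen set
   merged into one tile of value its sum (which must lie in A); singleton
   blocks are untouched tiles. *)
Definition agg_step (n : nat) (A : pred nat) (p q : seq nat) : Prop :=
  size p < n /\
  exists bs : seq (seq nat),
    [/\ perm_eq (flatten bs) (1 :: p),
        all (fun b => b != [::]) bs,
        all (fun b => (1 < size b) ==> A (sumn b)) bs &
        perm_eq q (map sumn bs)].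

Inductive agg_reachable (n : nat) (A : pred nat) : seq nat -> Prop :=
| agg_reach_init : agg_reachable n A [::]
| agg_reach_step p q : agg_reachable n A p -> agg_step n A p q ->
    agg_reachable n A q.

Definition total_value (p : seq nat) : nat := sumn p.

(* Main.v *)
Require Import Defs.
From mathcomp Require Import all_boot.
From mathcomp Require Import zify.

Definition bok (A : pred nat) (b : seq nat) : bool :=
  (b != [::]) && ((1 < size b) ==> A (sumn b)).
Definition blocks_ok (A : pred nat) (bs : seq (seq nat)) : bool := all (bok A) bs.

Lemma blocks_okE A bs : blocks_ok A bs =
  all (fun b => b != [::]) bs && all (fun b => (1 < size b) ==> A (sumn b)) bs.
Proof. by rewrite /blocks_ok -all_predI. Qed.

Lemma perm_map_inv (t : seq nat) (s : seq (seq nat)) :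
  perm_eq [seq sumn i | i <- s] t ->
  exists s', perm_eq s s' /\ [seq sumn i | i <- s'] = t.
Proof.
elim: t s => [|y t IH] s H.
  exists s; split => //; move: (perm_size H); rewrite size_map; by case: s {H}.
have : y \in [seq sumn i | i <- s] by rewrite (perm_mem H) inE eqxx.
case/mapP => a As Hy.
have Hs := perm_to_rem As.
have H2 : perm_eq [seq sumn i | i <- rem a s] t.
  rewrite -(perm_cons (sumn a)).
  have H5 := perm_map sumn Hs; rewrite /= in H5.
  rewrite perm_sym in H5.
  apply: (perm_trans H5). by rewrite -Hy.
have [s'' [H3 H4]] := IH _ H2.
exists (a :: s''); split; last by rewrite /= H4 Hy.
apply: (perm_trans Hs); by rewrite perm_cons.
Qed.

Lemma perm_map_split (s : seq (seq nat)) X Y :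
  perm_eq [seq sumn i | i <- s] (X ++ Y) ->
  exists s1 s2, perm_eq s (s1 ++ s2) /\ [seq sumn i | i <- s1] = X /\
     [seq sumn i | i <- s2] = Y.
Proof.
move=> /perm_map_inv [s' [H1 H2]].
exists (take (size X) s'), (drop (size X) s'); rewrite cat_take_drop; split => //.
by rewrite map_take map_drop H2 take_size_cat // drop_size_cat.
Qed.

Arguments perm_map_split {s X Y}.

Lemma coarse_trans A gs bs : blocks_ok A gs -> blocks_ok A bs ->
  perm_eq (flatten bs) [seq sumn i | i <- gs] ->
  exists cs, [/\ blocks_ok A cs, perm_eq (flatten cs) (flatten gs) &
    [seq sumn i | i <- cs] = [seq sumn i | i <- bs]].
Proof.
elim: bs gs => [|b bs IH] gs Hg Hb H.
  exists [::]; split => //; move: (perm_size H); rewrite size_map; by case: gs {H Hg}.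
rewrite /= perm_sym in H.
have [gs1 [gs2 [H1 [H2 H3]]]] := perm_map_split H.
have Hg12 : blocks_ok A (gs1 ++ gs2) by rewrite /blocks_ok -(perm_all _ H1).
move: Hg12; rewrite /blocks_ok all_cat => /andP [Hg1 Hg2].
move: Hb; rewrite /= => /andP [Hb0 Hb].
have Hx : perm_eq (flatten bs) [seq sumn i | i <- gs2] by rewrite H3.
have [cs2 [Hc1 Hc2 Hc3]] := IH gs2 Hg2 Hb Hx.
exists (flatten gs1 :: cs2); split.
- apply/andP; split; last exact Hc1. rewrite /bok.
  have Hs : sumn (flatten gs1) = sumn b by rewrite sumn_flatten H2.
  move: Hb0; rewrite /bok => /andP [bn bA].
  rewrite Hs.
  case: gs1 H2 Hg1 {H1 H3 Hs} => [Hgb|g gs1 Hgb] /=; first by rewrite -Hgb in bn.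
  move=> /andP [/andP [gn gA] _].
  apply/andP; split; first by move: gn; rewrite -!size_eq0 size_cat; case: (size g).
  apply/implyP => Hsz.
  case: (ltnP 1 (size b)) => Hb1; first exact: (implyP bA).
  move: Hgb Hb1 bn; clear -gA Hsz; case: b => [//|b0 [|//]] [<- Hgs] _ _.
  move: Hsz; case: gs1 Hgs => [_|//]; rewrite /= cats0 addn0 => Hsz; exact: (implyP gA).
- rewrite /=; apply: (@perm_trans _ (flatten gs1 ++ flatten gs2)); first by rewrite perm_cat2l.
  rewrite -flatten_cat; by apply: perm_flatten; rewrite perm_sym.
- by rewrite /= Hc3 sumn_flatten H2.
Qed.

Lemma step_sum n A p q : agg_step n A p q -> sumn q = (sumn p).+1.
Proof.
case=> _ [bs [H1 _ _ H4]].
by rewrite (perm_sumn H4) -sumn_flatten (perm_sumn H1).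
Qed.

Arguments step_sum {n A p q}.

Lemma reach_down m A q : agg_reachable m A q -> forall k, k <= sumn q ->
  exists q', agg_reachable m A q' /\ sumn q' = k.
Proof.
elim=> [|p q' Hp IH Hs] k Hk.
  by exists [::]; split; [constructor | move: Hk; rewrite leqn0 => /eqP].
rewrite (step_sum Hs) in Hk.
case: (ltnP k (sumn p).+1) => Hk2; first exact: IH.
exists q'; split; first exact: agg_reach_step Hp Hs.
rewrite (step_sum Hs); apply/eqP; rewrite eqn_leq Hk2 Hk //.
Qed.

Lemma reach_all m (A : pred nat) (hA1 : A 1) q : agg_reachable m A q -> all A q.
Proof.
elim=> [//|p q' Hp IH [_ [bs [H1 H2 H3 H4]]]].
rewrite (perm_all _ H4); apply/allP => a /mapP [b Hb ->].
have := allP H3 b Hb; case: (ltnP 1 (size b)) => [_ /= -> //|Hsz _].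
move: (allP H2 b Hb) Hsz; case: b Hb => [//|c [|//]] Hb _ _ /=.
rewrite addn0.
have : c \in 1 :: p by rewrite -(perm_mem H1); apply/flattenP; exists [:: c]; rewrite ?inE.
by rewrite inE => /orP [/eqP -> //|]; apply: (allP IH).
Qed.

Lemma flatten_single (s : seq nat) : flatten [seq [:: t] | t <- s] = s.
Proof. by elim: s => //= a s ->. Qed.

Lemma sumn_single (s : seq nat) : [seq sumn i | i <- [seq [:: t] | t <- s]] = s.
Proof. by elim: s => //= a s ->; rewrite addn0. Qed.

Lemma step_single m A Q : size Q < m -> agg_step m A Q (1 :: Q).
Proof.
move=> Hs; split => //; exists [seq [:: t] | t <- 1 :: Q]; split.
- by rewrite flatten_single.
- by apply/allP => b /mapP [t _ ->].
- by apply/allP => b /mapP [t _ ->].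
- by rewrite sumn_single.
Qed.

Lemma merge_last n A q : agg_reachable n A q -> 0 < sumn q -> A (sumn q) ->
  agg_reachable n A [:: sumn q].
Proof.
case=> [//|p q' Hp [Hsz [bs [H1 H2 H3 H4]]]] _ HA.
apply: (agg_reach_step Hp); split => //; exists [:: flatten bs]; split => //=.
- by rewrite cats0.
- rewrite andbT; apply/negP => /eqP E; move: (perm_size H1); by rewrite E.
- by rewrite andbT sumn_flatten -(perm_sumn H4) HA implybT.
- rewrite sumn_flatten (perm_sumn H4). by [].
Qed.

Lemma lift n A y p : agg_reachable n A [:: y] -> agg_reachable n.-1 A p ->
  agg_reachable n A (y :: p).
Proof.
move=> Hy; elim=> [//|p1 q1 Hp IH [Hsz [bs [H1 H2 H3 H4]]]].
apply: (agg_reach_step IH); split; first by rewrite /=; move: Hsz; case: n {Hy IH Hp} => //.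
exists ([:: y] :: bs); split => /=.
- by rewrite perm_sym (perm_catCA [:: 1] [:: y] p1) /= perm_cons perm_sym.
- exact: H2.
- exact: H3.
- by rewrite addn0 perm_cons.
Qed.

Definition Inv n (A : pred nat) (q : seq nat) :=
  q = [::] \/ exists v rest, perm_eq q (v :: rest) /\
    forall R B, perm_eq rest (R ++ B) -> exists Q gs,
      [/\ agg_reachable n.-1 A Q, blocks_ok A gs, perm_eq (flatten gs) Q,
          perm_eq [seq sumn i | i <- gs] B &
          (size Q <= size B) || (size Q + 2 <= n)].

Ltac pcount := apply/permP => PP;
  repeat match goal with H : is_true (@perm_eq Datatypes_nat__canonical__eqtype_Equality _ _) |- _ =>
    move/permP: H => /(_ PP) end;
  rewrite ?count_cat /=; intros; lia.

Lemma blocks_ok_sub A bs bs' : blocks_ok A bs -> {subset bs' <= bs} -> blocks_ok A bs'.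
Proof. move=> /allP H Hs; apply/allP => b Hb; exact: H (Hs b Hb). Qed.

Arguments blocks_ok_sub {A bs bs'}.
Arguments coarse_trans {A gs bs}.

Lemma inv_reach n A q : agg_reachable n A q -> Inv n A q.
Proof.
elim=> [|p q0 Hp IH [Hsz [bs [H1 H2 H3 H4]]]]; first by left.
have Hbs : blocks_ok A bs by rewrite blocks_okE H2 H3.
right.
case: IH => [Ep|[v [rest [Hv IHc]]]].
- subst p. exists 1, [::]; split.
  + case: bs H1 H2 H4 {H3 Hbs} => [|b [|b' bs']] H1 H2 H4.
    * by move: (perm_size H1).
    * apply: (perm_trans H4) => /=.
      have Hb1 : perm_eq b [:: 1] by rewrite -(cats0 b).
      by rewrite (perm_sumn Hb1).
    * move: (perm_size H1) H2; clear H1 H4 => /=; rewrite !size_cat /=.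
      case: b => [|? ?]; case: b' => [|? ?] //=; lia.
  + move=> R B /esym/eqP; rewrite perm_sym => /perm_nilP /esym E.
    have EB : B = [::] by case: R B E => [|//] [|//].
    exists [::], [::]; split => //; [constructor | by rewrite EB].
have Hvin : v \in flatten bs by rewrite (perm_mem H1) inE (perm_mem Hv) inE eqxx orbT.
case/flattenP: Hvin => b0 Hb0 Hvb0.
have Hbs' := perm_to_rem Hb0.
have Hb0v := perm_to_rem Hvb0.
have F1 := perm_flatten Hbs'.
set bs' := rem b0 bs in Hbs' F1.
have E1 : perm_eq (1 :: rest) (rem v b0 ++ flatten bs').
  move: F1 => /= F1; pcount.
exists (sumn b0), [seq sumn i | i <- bs']; split.
  apply: (perm_trans H4); exact: (perm_map sumn Hbs').
move=> R' B' HRB.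
have [bsR [bsB [Hsp [HR HB]]]] := perm_map_split HRB.
have F2 := perm_flatten Hsp; rewrite flatten_cat in F2.
have HbsB : blocks_ok A bsB.
  apply: (blocks_ok_sub Hbs) => b Hb.
  have : b \in bs' by rewrite (perm_mem Hsp) mem_cat Hb orbT.
  exact: mem_rem.
have E2 : perm_eq (1 :: rest) ((rem v b0 ++ flatten bsR) ++ flatten bsB) by pcount.
have Hsrest : (size rest).+1 = size p by rewrite (perm_size Hv).
have H1in : 1 \in (rem v b0 ++ flatten bsR) ++ flatten bsB by rewrite -(perm_mem E2) inE eqxx.
rewrite mem_cat in H1in.
case: (boolP (1 \in flatten bsB)) => HY.
- have HY' := perm_to_rem HY.
  have E3 : perm_eq rest ((rem v b0 ++ flatten bsR) ++ rem 1 (flatten bsB)) by pcount.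
  have [Q [gs [HQ Hgs HgQ HgB Hcell]]] := IHc _ _ E3.
  have Hsz3 := perm_size E3; rewrite size_cat in Hsz3.
  have Hg1 : blocks_ok A ([:: 1] :: gs) by apply/andP; split.
  have Hfl : perm_eq (flatten bsB) [seq sumn i | i <- [:: 1] :: gs].
    apply: (perm_trans HY'); by rewrite /= perm_cons perm_sym.
  have [cs [Hcs HcF HcS]] := coarse_trans Hg1 HbsB Hfl.
  exists [seq sumn i | i <- cs], [seq [:: t] | t <- [seq sumn i | i <- cs]]; split.
  + apply: (agg_reach_step HQ); split.
      move: Hcell => /orP [] Hc; clear -Hc Hsz3 Hsrest Hsz; lia.
    exists cs; split.
    * apply: (perm_trans HcF); by rewrite /= perm_cons.
    * by move: Hcs; rewrite blocks_okE => /andP [].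
    * by move: Hcs; rewrite blocks_okE => /andP [].
    * exact: perm_refl.
  + by apply/allP => b /mapP [t _ ->].
  + by rewrite flatten_single.
  + by rewrite sumn_single HcS HB.
  + by rewrite -HB HcS leqnn.
- have HX : 1 \in rem v b0 ++ flatten bsR by move: H1in; rewrite (negbTE HY) orbF.
  have HX' := perm_to_rem HX.
  have E3 : perm_eq rest (rem 1 (rem v b0 ++ flatten bsR) ++ flatten bsB).
    rewrite -(perm_cons 1); apply: (perm_trans E2); by rewrite -cat_cons perm_cat2r.
  have [Q [gs [HQ Hgs HgQ HgB Hcell]]] := IHc _ _ E3.
  have Hsz3 := perm_size E3; rewrite size_cat in Hsz3.
  have Hfl : perm_eq (flatten bsB) [seq sumn i | i <- gs] by rewrite perm_sym.
  have [cs [Hcs HcF HcS]] := coarse_trans Hgs HbsB Hfl.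
  exists Q, cs; split.
  + exact: HQ.
  + exact: Hcs.
  + exact: perm_trans HcF HgQ.
  + by rewrite HcS HB.
  + apply/orP; right; move: Hcell => /orP [] Hc; clear -Hc Hsz3 Hsrest Hsz; lia.
Qed.

Lemma reach_inv n A q : agg_reachable n A q -> q <> [::] ->
  exists p, agg_reachable n A p /\ agg_step n A p q.
Proof. case=> [//|p q' Hp Hs] _; by exists p. Qed.

Arguments reach_down {m A q}.
Arguments merge_last {n A q}.
Arguments reach_inv {n A q}.
Arguments inv_reach {n A q}.

Theorem lemma2 (A : pred nat) (hApos : forall a, A a -> 0 < a) (hA1 : A 1)
    (x y n : nat) (hx : A x) (hx1 : 1 < x)
    (hy : A y) (hyx : y < x) (hymax : forall z, A z -> z < x -> z <= y)
    (hn : 1 <= n) :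
  agg_reachable n A [:: x] <->
  (agg_reachable n A [:: y] /\
   exists p, agg_reachable n.-1 A p /\ total_value p = x - y).
Proof.
rewrite /total_value; have y0 := hApos y hy.
split.
- move=> Hx; split.
  + have Hle : y <= sumn [:: x] by rewrite /= addn0 ltnW.
    have [q [Hq Hsq]] := reach_down Hx _ Hle.
    have := merge_last Hq; rewrite Hsq; apply => //.
  + have [p [Hp Hs]] := reach_inv Hx (fun E => ltac:(discriminate E)).
    have Hsp := step_sum Hs; rewrite /= addn0 in Hsp.
    have Hszp : size p < n by case: Hs.
    case: (inv_reach Hp) => [Ep|[v [rest [Hv IHc]]]].
      by move: Hsp; rewrite Ep /= => E; move: hx1; rewrite E.
    have [Q [gs [HQ Hgs HgQ HgB Hcell]]] := IHc [::] rest (perm_refl _).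
    have SQ : sumn Q = sumn rest by rewrite -(perm_sumn HgQ) sumn_flatten (perm_sumn HgB).
    have Sp : sumn p = v + sumn rest by rewrite (perm_sumn Hv).
    have Szp : size p = (size rest).+1 by rewrite (perm_size Hv).
    have Av : A v by apply: (allP (@reach_all _ _ hA1 _ Hp)); rewrite (perm_mem Hv) inE eqxx.
    have vy : v <= y by apply: hymax => //; lia.
    have Hlt : size Q < n.-1 by move: Hcell => /orP [] Hc; clear -Hc Szp Hszp; lia.
    have HQ' := agg_reach_step HQ (@step_single _ A _ Hlt).
    have Hle : x - y <= sumn (1 :: Q) by rewrite /= SQ; lia.
    have [p' [Hp' Hs']] := reach_down HQ' _ Hle.
    by exists p'.
- move=> [Hy [p [Hp Hsum]]].
  have Hpn : p <> [::] by move=> E; move: Hsum; rewrite E /=; lia.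
  have [p1 [Hp1 [Hsz1 [bs [H1 H2 H3 H4]]]]] := reach_inv Hp Hpn.
  have L := lift _ _ _ _ Hy Hp1.
  have Sb : sumn (flatten bs) = x - y by rewrite sumn_flatten -(perm_sumn H4).
  apply: (agg_reach_step L); split; first by rewrite /=; clear -Hsz1 hn; lia.
  exists [:: y :: flatten bs]; split.
  + by rewrite /= cats0 perm_sym (perm_catCA [:: 1] [:: y] p1) /= perm_cons perm_sym.
  + by [].
  + rewrite /= andbT Sb.
    have -> : y + (x - y) = x by lia.
    by rewrite hx implybT.
  + rewrite /= Sb.
    have -> : y + (x - y) = x by lia.
    exact: perm_refl.
Qed.
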